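(* Let $m\ge2$ be an integer and let $g\in C^\infty(\mathbb{R})$ with $g(0)>0$. Let $\tilde g\in C^\infty(\mathbb{R})$ satisfy, for some $0<\delta<1$: $\tilde g(x)=g(x)$ for $|x|\le\delta$, $\tilde g(x)=\frac9{10}g(0)$ for $|x|\ge1$, and $0\le -x\tilde g'(x)<\frac15 g(0)$, $|x^2\tilde g''(x)|<\frac15g(0)$ for all $x\in\mathbb{R}$; and suppose $\frac9{10}g(0)\le\tilde g\le g(0)$ on $\mathbb{R}$. Put $\hat g=\tilde g/g(0)$, $p(s,\tilde X)=\hat g(\tilde Xs)s^{2m}-s$, and let $\alpha\in C^\infty([0,\infty))$ be the function with $\frac{\partial p}{\partial s}(\alpha(\tilde X),\tilde X)=0$ and $(2m)^{-\frac1{2m-1}}\le\alpha(\tilde X)\le(\frac45\cdot2m)^{-\frac1{2m-1}}$ for all $\tilde X\ge0$. Define $a(\tilde X)=-p(\alpha(\tilde X),\tilde X)$. Then for all $\tilde X\ge0$, $$a(\tilde X)\ge a(0)=a:=(2m)^{-\frac1{2m-1}}-(2m)^{-\frac{2m}{2m-1}}.$$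
   Context: Existence (and uniqueness within the interval $[(2m)^{-1/(2m-1)},(\frac45 2m)^{-1/(2m-1)}]$, since $p$ is strictly convex in $s$ there) of such a smooth function $\alpha$ is part of the setting. *)

(* Defs.v *)
From Stdlib Require Import Reals Lra.
From Coquelicot Require Import Coquelicot.
Open Scope R_scope.

Definition smooth (f : R -> R) : Prop :=
  forall (n : nat) (x : R), ex_derive (Derive_n f n) x.

(* f is C^infinity on [0, oo): smooth on an open neighbourhood (-eps, oo)
   of the closed half-line. *)
Definition smooth_on_halfline (f : R -> R) : Prop :=
  exists eps : R, 0 < eps /\
    forall (n : nat) (x : R), -eps < x -> ex_derive (Derive_n f n) x.

(* Main.v *)
Require Import Defs.
From Stdlib Require Import Reals Lra Lia.
From Coquelicot Require Import Coquelicot.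
Open Scope R_scope.

Lemma cont_of_derive (f : R -> R) x l : is_derive f x l -> continuity_pt f x.
Proof.
  intro H. apply continuity_pt_filterlim. exact (@ex_derive_continuous R_AbsRing R_NormedModule f x (ex_intro _ l H)).
Qed.

Theorem lemma6p7 (m : nat) (g gt alpha : R -> R) (delta : R) :
  (2 <= m)%nat ->
  smooth g -> 0 < g 0 ->
  smooth gt ->
  0 < delta < 1 ->
  (forall x, Rabs x <= delta -> gt x = g x) ->
  (forall x, 1 <= Rabs x -> gt x = 9 / 10 * g 0) ->
  (forall x, 0 <= - x * Derive gt x /\ - x * Derive gt x < 1 / 5 * g 0) ->
  (forall x, Rabs (x ^ 2 * Derive_n gt 2 x) < 1 / 5 * g 0) ->
  (forall x, 9 / 10 * g 0 <= gt x <= g 0) ->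
  let ghat := fun x => gt x / g 0 in
  let p := fun s X => ghat (X * s) * s ^ (2 * m) - s in
  smooth_on_halfline alpha ->
  (forall X, 0 <= X ->
     Derive (fun s => p s X) (alpha X) = 0 /\
     Rpower (2 * INR m) (- (1 / (2 * INR m - 1))) <= alpha X /\
     alpha X <= Rpower (4 / 5 * (2 * INR m)) (- (1 / (2 * INR m - 1)))) ->
  let a := fun X => - p (alpha X) X in
  a 0 = Rpower (2 * INR m) (- (1 / (2 * INR m - 1)))
        - Rpower (2 * INR m) (- (2 * INR m / (2 * INR m - 1))) /\
  (forall X, 0 <= X -> a X >= a 0).
Proof.
  intros Hm _ Hg0 Hsm Hdl Hdel _ H1 H2 Hb ghat p _ Hal a.
  set (g0 := g 0) in *.
  set (M := INR m).
  assert (HM : 2 <= M) by (unfold M; replace 2 with (INR 2) by (simpl; lra); apply le_INR; lia).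
  set (n := (2 * m)%nat).
  set (k := (2 * m - 2)%nat).
  assert (Hnk : n = (k + 2)%nat) by (unfold n, k; lia).
  assert (Hpn : Nat.pred n = (k + 1)%nat) by (rewrite Hnk; lia).
  assert (HINRn : INR n = 2 * M) by (unfold n, M; rewrite mult_INR; simpl; ring).
  assert (HINRk : INR k = 2 * M - 2).
  { assert (INR n = INR (k+2)) by now rewrite <- Hnk.
    rewrite plus_INR in H. simpl in H. lra. }
  assert (D0 : forall x, ex_derive gt x) by (intro x; exact (Hsm 0%nat x)).
  assert (D1 : forall x, ex_derive (Derive gt) x) by (intro x; exact (Hsm 1%nat x)).
  set (g1 := Derive gt). set (g2 := Derive g1).
  assert (Hg2 : forall x, Derive_n gt 2 x = g2 x) by reflexivity.
  set (L := Rpower (2 * M) (- (1 / (2 * M - 1)))).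
  assert (HL : 0 < L) by (unfold L, Rpower; apply exp_pos).
  set (df := fun X s => X * g1 (X * s) / g0 * s ^ n + gt (X * s) / g0 * (INR n * s ^ (k+1)) - 1).
  assert (Hdf : forall X s, is_derive (fun s => p s X) s (df X s)).
  { intros X s. unfold p, ghat, df. fold n. auto_derive. apply D0.
    rewrite Hpn. unfold g1. match goal with |- ?A = ?B => change (@eq R A B) end. change (Derive (fun x => gt x)) with (Derive gt). field. lra. }
  set (d2f := fun X s => s ^ k / g0 * ((X*s)^2 * g2 (X*s) + 2 * (2*M) * ((X*s) * g1 (X*s))
             + (2*M) * (2*M-1) * gt (X*s))).
  assert (Hd2f : forall X s, is_derive (df X) s (d2f X s)).
  { intros X s. unfold df, d2f. auto_derive. split. apply D1. split; [apply D0|exact I].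
    replace (Nat.pred n) with (k+1)%nat by now rewrite Hpn.
    replace (Nat.pred (k+1)) with k by lia.
    change (Derive (fun x => gt x)) with g1. change (Derive (fun x => g1 x)) with g2.
    rewrite HINRn, plus_INR, HINRk, Hnk, !pow_add. simpl. field. lra. }
  assert (Hpos : forall X s, 0 < s -> 0 <= d2f X s).
  { intros X s Hs. unfold d2f.
    apply Rmult_le_pos.
    - apply Rmult_le_pos. apply pow_le; lra. apply Rlt_le, Rinv_0_lt_compat; lra.
    - set (y := X * s). specialize (H1 y). specialize (H2 y). specialize (Hb y).
      rewrite Hg2 in H2. fold g1 in H1. apply Rabs_def2 in H2.
      assert (E1 : 2 * (2 * M) * (y * g1 y) >= 2 * (2*M) * (- (1/5*g0))).
      { apply Rle_ge, Rmult_le_compat_l; lra. }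
      assert (E2 : 2 * M * (2 * M - 1) * gt y >= 2 * M * (2 * M - 1) * (9/10*g0)).
      { apply Rle_ge, Rmult_le_compat_l. nra. lra. }
      assert (E3 : 0 <= (36/10*M*M - 26/10*M - 2/10) * g0).
      { apply Rmult_le_pos; nra. }
      nra. }
  assert (Ha0 : a 0 = L - L ^ n /\ Rpower (2 * M) (- (2 * M / (2 * M - 1))) = L ^ n).
  {
    destruct (Hal 0 (Rle_refl 0)) as [Hd0 [Hlo _]]. fold M in Hlo. fold L in Hlo.
    set (x := alpha 0) in *.
    assert (Hx : 0 < x) by lra.
    assert (E := is_derive_unique _ _ _ (Hdf 0 x)).
    assert (Hd0' : df 0 x = 0) by (rewrite <- E; exact Hd0). clear Hd0 E. rename Hd0' into Hd0.
    unfold df in Hd0.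
    rewrite !Rmult_0_l in Hd0.
    assert (Hgt0 : gt 0 = g0) by (apply Hdel; rewrite Rabs_R0; lra).
    rewrite Hgt0 in Hd0.
    assert (Hxp : x ^ (k+1) = / (2*M)).
    { replace (g0/g0) with 1 in Hd0 by (field; lra). rewrite HINRn in Hd0.
      assert (2*M*x^(k+1) = 1) by lra.
      apply (Rmult_eq_reg_l (2*M)); [|lra]. rewrite H. field. lra. }
    assert (Hxe : x = L).
    { assert (Hl : ln (x ^ (k+1)) = ln (/ (2*M))) by now rewrite Hxp.
      rewrite ln_pow, ln_Rinv, plus_INR, HINRk in Hl by lra. simpl in Hl.
      rewrite <- (exp_ln x Hx). unfold L, Rpower. f_equal.
      apply (Rmult_eq_reg_l (2*M-1)); [|lra]. field_simplify; lra. }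
    assert (HLn : Rpower (2 * M) (- (2 * M / (2 * M - 1))) = L ^ n).
    { rewrite <- Rpower_pow by lra. unfold L. rewrite Rpower_mult, HINRn.
      f_equal. field. lra. }
    split; [|exact HLn]. rewrite <- Hxe.
    unfold a, p, ghat. rewrite Rmult_0_l, Hgt0. fold n. change (alpha 0) with x. field. lra. }
  split.
  - fold M L. rewrite (proj2 Ha0). exact (proj1 Ha0).
  - intros X HX.
    destruct (Hal X HX) as [HdX [HloX _]]. fold M L in HloX.
    set (s1 := alpha X) in *.
    assert (E := is_derive_unique _ _ _ (Hdf X s1)).
    assert (Hd0' : df X s1 = 0) by (rewrite <- E; exact HdX). clear HdX E. rename Hd0' into HdX.
    assert (Hneg : forall c, L <= c <= s1 -> df X c <= 0).
    { intros c Hc.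
      destruct (MVT_gen (df X) c s1 (d2f X)) as [d [Hd Heq]].
      + intros; apply Hd2f.
      + intros; eapply cont_of_derive; apply Hd2f.
      + rewrite Rmin_left, Rmax_right in Hd by lra.
        assert (0 <= d2f X d) by (apply Hpos; lra).
        rewrite HdX in Heq. nra. }
    destruct (MVT_gen (fun s => p s X) L s1 (df X)) as [c [Hc Heq]].
    + intros; apply Hdf.
    + intros; eapply cont_of_derive; apply Hdf.
    + rewrite Rmin_left, Rmax_right in Hc by lra.
      specialize (Hneg c Hc).
      assert (Hf : p s1 X <= p L X) by nra.
      rewrite (proj1 Ha0). unfold a. fold s1.
      assert (p L X <= L ^ n - L).
      { unfold p, ghat. fold n. specialize (Hb (X * L)). fold g0 in Hb.
        assert (0 <= L ^ n) by (apply pow_le; lra).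
        assert (gt (X*L)/g0 <= 1) by (apply Rmult_le_reg_r with g0; [lra|]; field_simplify; lra).
        nra. }
      lra.
Qed.
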